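(* If $f:\mathbb R^n\to\overline{\mathbb R}$ is a-strongly convex, then $f$ is essentially strictly convex.
   Context: Standing assumption: $\phi:\mathbb R^n\to\mathbb R$ is convex, finite-valued, differentiable and strictly convex (Legendre with full domain), super-coercive; $\phi^*$ has the same properties and $\nabla\phi^*=(\nabla\phi)^{-1}$. $\partial f$ is the limiting subdifferential. A proper lsc $f$ is a-strongly convex if for every $(\bar x,\bar v)\in\operatorname{graph}\partial f$: $f(x)\ge f(\bar x)+\phi(x-\bar x+\nabla\phi^*(\bar v))-\phi(\nabla\phi^*(\bar v))$ for all $x$. A proper lsc convex $f$ is essentially strictly convex if it is strictly convex on every convex subset of $\operatorname{dom}\partial f$. *)

(* Defs.v *)
(* R : realType, R^n = 'rV[R]_n (sup-norm topology). *)
From HB Require Import structures.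
From mathcomp Require Import all_boot all_order all_algebra.
From mathcomp Require Import all_classical all_reals all_analysis.
Set Implicit Arguments. Unset Strict Implicit. Unset Printing Implicit Defensive.
Import Order.TTheory GRing.Theory Num.Theory.
Import numFieldNormedType.Exports.
Local Open Scope classical_set_scope.
Local Open Scope ring_scope.

Section Defs.
Variables (R : realType) (n : nat).
Notation V := 'rV[R]_n.

Definition dotp (u v : V) : R := \sum_(i < n) u ord0 i * v ord0 i.

Definition grad (g : V -> R) (x : V) : V :=
  \row_(i < n) derive g x (delta_mx ord0 i : V).

Definition fconj (g : V -> R) (y : V) : R :=
  sup [set dotp x y - g x | x in [set: V]].

Definition convex_fun (g : V -> R) : Prop :=
  forall x y (t : R), 0 <= t <= 1 -> g (t *: x + (1 - t) *: y) <= t * g x + (1 - t) * g y.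

Definition strictly_convex_fun (g : V -> R) : Prop :=
  forall x y (t : R), x != y -> 0 < t < 1 ->
    g (t *: x + (1 - t) *: y) < t * g x + (1 - t) * g y.

Definition supercoercive (g : V -> R) : Prop :=
  forall M : R, exists r : R, forall x : V, r < `|x| -> M <= g x / `|x| .

(* phi is a Legendre function with full domain, super-coercive (and so is its conjugate) *)
Definition standing_phi (phi : V -> R) : Prop :=
  [/\ [/\ convex_fun phi, (forall x, differentiable phi x), strictly_convex_fun phi
      & supercoercive phi],
      [/\ (forall y, has_sup [set dotp x y - phi x | x in [set: V]]),
          convex_fun (fconj phi), (forall y, differentiable (fconj phi) y),
          strictly_convex_fun (fconj phi) & supercoercive (fconj phi)] &
      (forall x, grad (fconj phi) (grad phi x) = x) /\
      (forall y, grad phi (grad (fconj phi) y) = y)].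

Local Open Scope ereal_scope.

Definition proper_fun (f : V -> \bar R) : Prop :=
  (forall x, f x != -oo) /\ exists x, f x < +oo.

Definition convex_efun (f : V -> \bar R) : Prop :=
  forall (x y : V) (t : R), (0 <= t <= 1)%R ->
    f (t *: x + (1 - t) *: y)%R <= t%:E * f x + (1 - t)%:E * f y.

Definition frechet_subgrad (f : V -> \bar R) (x v : V) : Prop :=
  f x \is a fin_num /\
  forall eps : R, (0 < eps)%R -> exists2 delta : R, (0 < delta)%R &
    forall y : V, (`|y - x| < delta)%R ->
      f x + (dotp v (y - x) - eps * `|y - x|)%:E <= f y.

Definition limiting_subgrad (f : V -> \bar R) (x v : V) : Prop :=
  f x \is a fin_num /\ exists (xk vk : nat -> V),
    [/\ xk @ \oo --> x, (fun k => f (xk k)) @ \oo --> f x,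
        vk @ \oo --> v & forall k, frechet_subgrad f (xk k) (vk k)].

Definition dom_subgrad (f : V -> \bar R) : set V :=
  [set x | exists v, limiting_subgrad f x v].

Definition convex_setV (C : set V) : Prop :=
  forall (x y : V) (t : R), C x -> C y -> (0 <= t <= 1)%R -> C (t *: x + (1 - t) *: y)%R.

Definition a_strongly_convex (phi : V -> R) (f : V -> \bar R) : Prop :=
  proper_fun f /\ lower_semicontinuous f /\
  forall xb vb, limiting_subgrad f xb vb ->
    forall x, f xb + (phi (x - xb + grad (fconj phi) vb)%R
                      - phi (grad (fconj phi) vb))%:E <= f x.

Definition strictly_convex_on (f : V -> \bar R) (C : set V) : Prop :=
  forall (x y : V) (t : R), C x -> C y -> x != y -> (0 < t < 1)%R ->
    f (t *: x + (1 - t) *: y)%R < t%:E * f x + (1 - t)%:E * f y.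

Definition essentially_strictly_convex (f : V -> \bar R) : Prop :=
  [/\ proper_fun f, lower_semicontinuous f, convex_efun f &
      forall C, convex_setV C -> C `<=` dom_subgrad f -> strictly_convex_on f C].

End Defs.

(* Main.v *)
Require Import Defs.
From HB Require Import structures.
From mathcomp Require Import all_boot all_order all_algebra.
From mathcomp Require Import all_classical all_reals all_analysis.
From mathcomp Require Import ring lra.
Set Implicit Arguments. Unset Strict Implicit. Unset Printing Implicit Defensive.
Import Order.TTheory GRing.Theory Num.Def Num.Theory.
Import numFieldNormedType.Exports.
Local Open Scope classical_set_scope.
Local Open Scope ring_scope.



Section Aux.
Variables (R : realType) (n : nat).
Notation V := 'rV[R]_n.
Implicit Types u v w : V.

Lemma dotpC u v : dotp u v = dotp v u.
Proof. by apply: eq_bigr => i _; rewrite mulrC. Qed.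

Lemma dotpDl u v w : dotp (u + v) w = dotp u w + dotp v w.
Proof. by rewrite /dotp -big_split; apply: eq_bigr => i _; rewrite mxE mulrDl. Qed.

Lemma dotpZl (a : R) u v : dotp (a *: u) v = a * dotp u v.
Proof. by rewrite /dotp mulr_sumr; apply: eq_bigr => i _; rewrite mxE mulrA. Qed.

Lemma dotpNl u v : dotp (- u) v = - dotp u v.
Proof. by rewrite -scaleN1r dotpZl mulN1r. Qed.

Lemma dotpBl u v w : dotp (u - v) w = dotp u w - dotp v w.
Proof. by rewrite dotpDl dotpNl. Qed.

Lemma dotpDr u v w : dotp u (v + w) = dotp u v + dotp u w.
Proof. by rewrite dotpC dotpDl !(dotpC u). Qed.

Lemma dotpZr (a : R) u v : dotp u (a *: v) = a * dotp u v.
Proof. by rewrite dotpC dotpZl dotpC. Qed.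

Lemma dotpBr u v w : dotp u (v - w) = dotp u v - dotp u w.
Proof. by rewrite dotpC dotpBl !(dotpC u). Qed.

Lemma dotp_ge0 u : 0 <= dotp u u.
Proof. by apply: sumr_ge0 => i _; rewrite -expr2 sqr_ge0. Qed.

Lemma coord_le_norm u (i : 'I_n) : `|u ord0 i| <= `|u|.
Proof.
rewrite [`|u|]/normr /= mx_normrE.
by apply: (le_trans _ (le_bigmax _ _ (ord0, i))).
Qed.

Lemma dotp_le u : dotp u u <= n%:R * `|u| ^+ 2.
Proof.
apply: (@le_trans _ _ (\sum_(i < n) `|u| ^+ 2)); last first.
  by rewrite sumr_const card_ord mulr_natl.
apply: ler_sum => i _; rewrite -expr2 -real_normK ?num_real //.
by rewrite lerXn2r ?nnegrE ?coord_le_norm.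
Qed.

Lemma norm_sq_le u : `|u| ^+ 2 <= dotp u u.
Proof.
have H : `|u| <= Num.sqrt (dotp u u).
  rewrite [`|u|]/normr /= mx_normrE.
  apply: bigmax_le => [|[i j] _]; first exact: sqrtr_ge0.
  rewrite (ord1 i) /= -(sqrtr_sqr (u ord0 j)) ler_sqrt ?dotp_ge0 //.
  rewrite /dotp (bigD1 j) //= -expr2 lerDl.
  by apply: sumr_ge0 => k _; rewrite -expr2 sqr_ge0.
rewrite -(sqr_sqrtr (dotp_ge0 u)) lerXn2r ?nnegrE ?sqrtr_ge0 //.
Qed.

End Aux.



Section Lsc.
Variable (R : realType).
Local Open Scope ereal_scope.

Lemma ereal_between (x y : \bar R) : x < y -> exists a : R, x < a%:E < y.
Proof.
case: x => [r| |]; case: y => [s| |] //=.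
- move=> rs; exists ((r + s) / 2)%R; rewrite !lte_fin.
  rewrite lte_fin in rs; apply/andP; split; lra.
- by move=> _; exists (r + 1)%R; rewrite !lte_fin ltrDl ltr01 ltey.
- by move=> _; exists (s - 1)%R; rewrite !lte_fin gtrDl ltrN10 ltNye.
- by move=> _; exists 0%R; rewrite ltey ltNye.
Qed.

Lemma lsc_min (T : topologicalType) (g : T -> \bar R) (A : set T) :
  compact A -> A !=set0 -> lower_semicontinuous g ->
  exists2 c, A c & forall t, A t -> g c <= g t.
Proof.
move=> cA [x0 Ax0] lg.
set m := ereal_inf (g @` A).
have mlb t : A t -> m <= g t by move=> At; apply: ereal_inf_lbound; exists t.
have [[a0 ma0]|nom] := pselect (exists a : R, m < a%:E); last first.
  have mE : m = +oo.
    move: nom; clear mlb; case: m => [r| |] // H; exfalso; apply: H.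
      by exists (r + 1)%R; rewrite lte_fin ltrDl.
    by exists 0%R; rewrite ltNye.
  exists x0 => // t At; have := mlb t At; rewrite mE leye_eq => /eqP ->.
  exact: leey.
pose F := filter_from [set a : R | m < a%:E] (fun a => [set x | A x /\ g x < a%:E]).
have FF : Filter F.
  apply: filter_from_filter; first by exists a0.
  move=> a b ma mb; exists (Order.min a b); first by rewrite /= EFin_min lt_min ma mb.
  by move=> x [Ax gx]; move: gx; rewrite EFin_min lt_min => /andP[h1 h2].
have PF : ProperFilter F.
  apply: filter_from_proper => // a ma.
  have [_ [y Ay <-] gya] := ereal_inf_lt ma.
  by exists y.
have FA : F A by exists a0 => // x [].
have [c [Ac clc]] := cA F PF FA.
exists c => // t At; apply: le_trans (mlb t At).
rewrite leNgt; apply/negP => mgc.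
have [a /andP[ma agc]] := ereal_between mgc.
have [U nU Ug] := lg c a agc.
have [y [[Ay gya] Uy]] := clc _ _ (ex_intro2 _ _ a ma (fun x h => h)) nU.
by have := Ug y Uy; rewrite ltNge (ltW gya).
Qed.

Lemma lsc_addr (T : pseudoMetricType R) (g : T -> \bar R) (h : T -> R) :
  lower_semicontinuous g -> continuous h ->
  lower_semicontinuous (fun x => g x + (h x)%:E).
Proof.
move=> lg ch x a.
case: (g x) (lg x) => [r| |] lgx //=.
- rewrite -EFinD lte_fin => axr.
  pose d := ((r + h x - a) / 2)%R.
  have d0 : (0 < d)%R by rewrite /d divr_gt0 //; lra.
  have [|U nU Ug] := lgx (r - d)%R; first by rewrite lte_fin; lra.
  have : \forall y \near x, (`|h x - h y| < d)%R.
    by have := ch x; move/cvgrPdist_lt => /(_ d d0).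
  move=> nh.
  exists (U `&` [set y | (`|h x - h y| < d)%R]); first by apply: filterI.
  move=> y [Uy hy]; have := Ug y Uy.
  case: (g y) => [s| |] //=; last by rewrite addye ?ltey.
  rewrite -EFinD !lte_fin => H.
  move: hy; rewrite /= ltr_norml => /andP[h1 h2].
  rewrite /d in H h1 h2; lra.
- rewrite addye // => _.
  have [U nU Ug] := lgx (a - h x + 1)%R (ltey _).
  have : \forall y \near x, (`|h x - h y| < 1)%R.
    by have := ch x; move/cvgrPdist_lt => /(_ 1%R ltr01).
  move=> nh.
  exists (U `&` [set y | (`|h x - h y| < 1)%R]); first by apply: filterI.
  move=> y [Uy hy]; have := Ug y Uy.
  case: (g y) => [s| |] //=; last by rewrite addye ?ltey.
  rewrite -EFinD !lte_fin => H.
  move: hy; rewrite /= ltr_norml => /andP[h1 h2].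
  lra.
Qed.

End Lsc.



Lemma grad_ineq (R : realType) (n : nat) (phi : 'rV[R]_n -> R) (c u : 'rV[R]_n) :
  convex_fun phi -> differentiable phi c ->
  dotp (grad phi c) u <= phi (c + u) - phi c.
Proof.
move=> cphi dphi.
have dE : dotp (grad phi c) u = derive phi c u.
  rewrite deriveE // {2}(row_sum_delta u) linear_sum /dotp.
  apply: eq_bigr => i _; rewrite linearZ /= /grad mxE deriveE // mulrC.
  by [].
rewrite dE.
have := @diff_derivable _ _ _ phi c u dphi; rewrite /derivable => dcvg.
have dcvg' : (fun h => h^-1 *: ((phi \o shift c) (h *: u) - phi c)) @ 0^'+ --> 'D_u phi c.
  have F1 : (0:R)^'+ --> (0:R)^'.
    move=> P; rewrite !nbhs_simpl /dnbhs /at_right /within /=.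
    by apply: filterS => x H x0; apply: H; exact: lt0r_neq0.
  exact: (cvg_trans (cvg_app _ F1) dcvg).
apply: (cvgr_to_le dcvg').
near=> h.
have h0 : 0 < h by near: h; exact: nbhs_right_gt.
have h1 : h < 1 by near: h; exact: nbhs_right_lt.
rewrite /= /shift.
have := cphi (u + c) c h; rewrite (ltW h0) (ltW h1) /= => /(_ isT).
have -> : h *: (u + c) + (1 - h) *: c = h *: u + c.
  by rewrite scalerDr scalerBl scale1r -addrA; congr (_ + _); rewrite addrC subrK.
rewrite addrC => H.
rewrite -[_ *: _]/(_ * _) mulrC ler_pdivrMr //.
rewrite mulrC; rewrite (addrC u c) in H; lra.
Unshelve. all: by end_near.
Qed.



Lemma cvg_bigsum (R : realType) (T : topologicalType) (I : Type) (s : seq I)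
  (F : I -> T -> R) (G : I -> R) (x : T) :
  (forall i, F i y @[y --> x] --> G i) ->
  \sum_(i <- s) F i y @[y --> x] --> \sum_(i <- s) G i.
Proof.
move=> HF; elim: s => [|a s IH].
  under eq_fun do rewrite big_nil.
  rewrite big_nil; exact: cvg_cst.
under eq_fun do rewrite big_cons.
rewrite big_cons; exact: cvgD.
Qed.

Lemma cont_dq (R : realType) (n : nat) (z : 'rV[R]_n) :
  continuous (fun y : 'rV[R]_n => dotp (y - z) (y - z)).
Proof.
move=> x; rewrite /dotp.
apply: (cvg_bigsum (T := 'rV[R]_n) (F := fun i y => (y - z) ord0 i * (y - z) ord0 i) (G := fun i => (x - z) ord0 i * (x - z) ord0 i)) => i.

have E : (fun y : 'rV[R]_n => (y - z) ord0 i) = (fun y => y ord0 i - z ord0 i).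
  by apply/funext => y; rewrite !mxE.
have c1 : (fun y => (y - z) ord0 i) @ x --> (x - z) ord0 i.
  rewrite E !mxE; exact: (cvgB (@coord_continuous _ 1 n ord0 i x) (cvg_cst (z ord0 i))).
exact: (cvgM c1 c1).
Qed.

Lemma cont_q (R : realType) (n : nat) (K : R) (z : 'rV[R]_n) :
  continuous (fun y : 'rV[R]_n => K * dotp (y - z) (y - z)).
Proof.
move=> x; have := cvgM (cvg_cst K) (@cont_dq _ _ z x).
exact.
Qed.



Section Approx.
Variables (R : realType) (n : nat).
Notation V := 'rV[R]_n.

Lemma compact_cball (z : V) (rho : R) : 0 < rho ->
  compact [set y : V | `|z - y| <= rho].
Proof.
move=> rho0; apply: bounded_closed_compact.
  change (\forall M \near +oo, globally [set y : V | `|z - y| <= rho] [set x : V | `|x| <= M]).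
  near=> M0 => y /= zy.
  have : `|y| <= `|z| + `|z - y|.
    by rewrite -{1}(subKr z y) (le_trans (ler_normB _ _)) // normrN.
  move=> H; apply: (le_trans H); apply: (le_trans (lerD (lexx _) zy)).
  by near: M0; apply: nbhs_pinfty_ge; rewrite num_real.
have -> : [set y : V | `|z - y| <= rho] = closed_ball z rho.
  by rewrite closed_ballE.
exact: closed_ball_closed.
Unshelve. all: by end_near.
Qed.


Lemma quad_id (K : R) (a b : V) :
  K * dotp (a + b) (a + b) = K * dotp b b + K * dotp a a - 2 * K * dotp (- b) a.
Proof. rewrite dotpNl !dotpDl !dotpDr (dotpC b a); ring. Qed.

Lemma approx_frechet (f : V -> \bar R) (z x0 : V) (X0 M : R) :
  (forall x, f x != -oo)%E -> lower_semicontinuous f ->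
  f x0 = X0%:E -> (M%:E < f z)%E ->
  exists w v, frechet_subgrad f w v /\ M < fine (f w) + dotp v (z - w).
Proof.
move=> fNy lf fx0 Mz.
have [U nU Uf] := lf z M Mz.
have /nbhs_ballP[del /= del0 bU] := nU.
have ballE y : `|z - y| < del -> (M%:E < f y)%E.
  by move=> H; apply: Uf; apply: bU; rewrite -ball_normE /ball_ /=.
set d := `|z - x0|.
have d0 : 0 <= d := normr_ge0 _.
have n0 : 0 <= n%:R :> R := ler0n _ _.
set rho := (n%:R + 1) * (d + 1).
have rho0 : 0 < rho by rewrite /rho mulr_gt0 //; lra.
have rhod : n%:R * d ^+ 2 + 1 <= rho ^+ 2 by rewrite /rho; nra.
have drho : d <= rho by rewrite /rho; nra.
set B := [set y : V | `|z - y| <= rho].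
have cB : compact B := @compact_cball z rho rho0.
have Bx0 : B x0 by [].
have [w0 Bw0 w0min] := lsc_min cB (ex_intro _ x0 Bx0) lf.
have : (f w0 <= X0%:E)%E by rewrite -fx0; apply: w0min.
case E0: (f w0) => [mlow| |] //; last by have := fNy w0; rewrite E0.
move=> _.
have mlowB t : B t -> (mlow%:E <= f t)%E by move=> Bt; rewrite -E0; exact: w0min.
set K := 1 + `|X0 - mlow| + `|M - mlow| / del ^+ 2.
have del20 : 0 < del ^+ 2 by rewrite exprn_gt0.
have Kge : 1 + `|X0 - mlow| <= K.
  by rewrite /K lerDl divr_ge0 // ltW.
have K0 : 0 < K by apply: lt_le_trans Kge; have := normr_ge0 (X0 - mlow); lra.
have KX : X0 - mlow < K by have := ler_norm (X0 - mlow); lra.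
have KM : M - mlow <= K * del ^+ 2.
  have : `|M - mlow| <= K * del ^+ 2.
    rewrite -ler_pdivrMr // /K; have := normr_ge0 (X0 - mlow); lra.
  by apply: le_trans; exact: ler_norm.
set h := fun y : V => K * dotp (y - z) (y - z).
have lF := lsc_addr lf (@cont_q _ _ K z).
have [w Bw wmin] := lsc_min cB (ex_intro _ x0 Bx0) lF.
have Fw := wmin x0 Bx0; rewrite fx0 /= in Fw.
case Ew: (f w) Fw => [W| |] Fw; last by have := fNy w; rewrite Ew.
  2: by move: Fw; rewrite addye.
rewrite -!EFinD lee_fin in Fw.
have WB : mlow <= W by have := mlowB w Bw; rewrite Ew lee_fin.
have hx0 : h x0 <= K * (n%:R * d ^+ 2).
  rewrite /h ler_wpM2l ?(ltW K0) //.
  by have := dotp_le (x0 - z); rewrite distrC.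
have int : `|z - w| < rho.
  rewrite ltNge; apply/negP => rw.
  have q1 : rho ^+ 2 <= dotp (w - z) (w - z).
    apply: le_trans (norm_sq_le (w - z)).
    by rewrite lerXn2r ?nnegrE ?(ltW rho0) // distrC.
  have q2 : K * rho ^+ 2 <= h w by rewrite /h ler_wpM2l ?(ltW K0).
  have q3 : K * (n%:R * d ^+ 2) + K <= K * rho ^+ 2.
    by rewrite -[X in _ + X]mulr1 -mulrDr ler_wpM2l ?(ltW K0).
  move: Fw; rewrite /h /= -/(h w) -/(h x0); lra.
set v := (2 * K) *: (z - w).
exists w, v; split.
- split; first by rewrite Ew.
  move=> eps eps0.
  set e1 := rho - `|z - w|.
  have Kn0 : 0 < K * n%:R + 1 by have := mulr_ge0 (ltW K0) n0; lra.
  set e2 := eps / (K * n%:R + 1).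
  have e10 : 0 < e1 by rewrite /e1; lra.
  have e20 : 0 < e2 by rewrite /e2 divr_gt0.
  exists (Order.min e1 e2); first by rewrite lt_min e10 e20.
  move=> y; rewrite lt_min => /andP[y1 y2].
  have By : B y.
    rewrite /B /=; have := ler_distD w z y.
    rewrite (distrC w y); rewrite /e1 in y1; lra.
  have Fy := wmin y By; rewrite Ew /= in Fy.
  rewrite Ew.
  case Ey: (f y) Fy => [Y| |] Fy; last by have := fNy y; rewrite Ey.
    2: by rewrite leey.
  rewrite -!EFinD lee_fin in Fy *.
  have hy : h y = h w + K * dotp (y - w) (y - w) - dotp v (y - w).
    rewrite /h /v (_ : y - z = (y - w) + (w - z)); last by rewrite addrA subrK.
    by rewrite quad_id dotpZl (_ : z - w = - (w - z)) ?opprB // mulrA.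
  set a := y - w.
  have bnd : K * dotp a a <= eps * `|a|.
    have : K * n%:R * `|a| <= eps.
      apply: (@le_trans _ _ ((K * n%:R + 1) * e2)); last first.
        by rewrite /e2 mulrC divfK // gt_eqF.
      apply: (@le_trans _ _ ((K * n%:R + 1) * `|a|)).
        by rewrite ler_wpM2r //; lra.
      by rewrite ler_wpM2l ?(ltW Kn0) // ltW.
    move=> H.
    apply: (@le_trans _ _ (K * (n%:R * `|a| ^+ 2))).
      by rewrite ler_wpM2l ?(ltW K0) // dotp_le.
    by rewrite expr2 mulrA mulrA ler_wpM2r.
  rewrite lee_fin; move: Fy; rewrite /h -/a in hy *; rewrite hy; lra.
- rewrite Ew /=.
  have dv : dotp v (z - w) = 2 * (K * dotp (z - w) (z - w)).
    by rewrite /v dotpZl mulrA.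
  rewrite dv.
  have q0 : 0 <= K * dotp (z - w) (z - w) by rewrite mulr_ge0 ?(ltW K0) ?dotp_ge0.
  have [zd|zd] := ltP `|z - w| del.
    have := ballE w zd; rewrite Ew lte_fin; lra.
  have q1 : del ^+ 2 <= dotp (z - w) (z - w).
    apply: le_trans (norm_sq_le (z - w)).
    by rewrite lerXn2r ?nnegrE ?(ltW del0).
  have q2 : K * del ^+ 2 <= K * dotp (z - w) (z - w) by rewrite ler_wpM2l ?(ltW K0).
  have q3 : 0 < K * del ^+ 2 by rewrite mulr_gt0.
  lra.
Qed.

End Approx.



Lemma combo (R : realType) (n : nat) (x y z c : 'rV[R]_n) (t : R) :
  t *: (x - z + c) + (1 - t) *: (y - z + c) = (t *: x + (1 - t) *: y) - z + c.
Proof. by apply/rowP => i; rewrite !mxE; ring. Qed.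

Lemma frechet_limiting (R : realType) (n : nat) (f : 'rV[R]_n -> \bar R) x v :
  frechet_subgrad f x v -> limiting_subgrad f x v.
Proof.
move=> fv; split; first by case: fv.
exists (fun=> x), (fun=> v); split => //; exact: cvg_cst.
Qed.

Theorem mainTheorem10 (R : realType) (n : nat) (phi : 'rV[R]_n -> R)
  (f : 'rV[R]_n -> \bar R) :
  standing_phi phi -> a_strongly_convex phi f -> essentially_strictly_convex f.
Proof.
move=> [[cphi dphi scphi _] _ [_ gradE]] [[fNy fex] [lf ineq]].
split => //.
- move=> x y t /andP[t0 t1].
  have [->|tn0] := eqVneq t 0.
    by rewrite scale0r add0r subr0 scale1r mul0e add0e mul1e.
  have [->|tn1] := eqVneq t 1.
    by rewrite scale1r subrr scale0r addr0 mul1e mul0e adde0.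
  have tp : 0 < t by rewrite lt_neqAle eq_sym tn0.
  have tq : t < 1 by rewrite lt_neqAle tn1.
  have tp' : 0 < 1 - t by lra.
  case Ex: (f x) => [X| |]; last by have := fNy x; rewrite Ex.
    2: rewrite gt0_muley ?lte_fin // addye ?leey //.
    2: case Ey0: (f y) => [r| |] //; [by rewrite gt0_muley ?lte_fin|by have := fNy y; rewrite Ey0].
  case Ey: (f y) => [Y| |]; last by have := fNy y; rewrite Ey.
    2: by rewrite gt0_muley ?lte_fin // addey ?leey.
  rewrite -!EFinM -EFinD.
  set z := t *: x + (1 - t) *: y.
  rewrite leNgt; apply/negP => Mz.
  have [w [v [fv Hlt]]] := @approx_frechet R n f z x X (t * X + (1 - t) * Y) fNy lf Ex Mz.
  have lv := frechet_limiting fv.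
  set c := grad (fconj phi) v.
  have Hx := ineq w v lv x; have Hy := ineq w v lv y.
  have [fwfin _] := fv.
  have Ew : f w = (fine (f w))%:E by rewrite fineK.
  move: Hlt Hx Hy; rewrite Ew Ex Ey; set W := fine (f w).
  rewrite -!EFinD !lee_fin => Hlt Hx Hy.
  have gi := grad_ineq (c := c) (z - w) cphi (dphi c).
  rewrite gradE in gi.
  have cv := cphi (x - w + c) (y - w + c) t.
  rewrite (ltW tp) (ltW tq) /= combo -/z addrC in cv.
  have := cv isT => {}cv.
  have Hx' := ler_wpM2l (ltW tp) Hx.
  have Hy' := ler_wpM2l (ltW tp') Hy.
  rewrite -/c in Hx' Hy'; rewrite /= in Hlt; lra.
- move=> C cC CD x y t Cx Cy xy /andP[tp tq].
  set z := t *: x + (1 - t) *: y.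
  have Cz : C z by apply: cC => //; rewrite ltW // ltW.
  have [v lv] := CD z Cz.
  have [fzfin _] := lv.
  set c := grad (fconj phi) v.
  have Hx := ineq z v lv x; have Hy := ineq z v lv y.
  have key : phi c < t * phi (x - z + c) + (1 - t) * phi (y - z + c).
    have := scphi (x - z + c) (y - z + c) t.
    rewrite combo subrr add0r; apply; last by rewrite tp tq.
    apply: contra xy => /eqP H; apply/eqP.
    by move/addIr: H => /addIr.
  have Ez : f z = (fine (f z))%:E by rewrite fineK.
  rewrite Ez in Hx Hy *; set Z := fine (f z).
  have tp' : (0 <= 1 - t)%R by lra.
  have Hx' := lee_wpmul2l (ltW tp : (0%:E <= t%:E)%E) Hx.
  have Hy' := lee_wpmul2l (tp' : (0%:E <= (1 - t)%:E)%E) Hy.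
  move: Hx' Hy'; rewrite -/c -/Z -!EFinD -!EFinM => Hx' Hy'.
  apply: (lt_le_trans _ (leeD Hx' Hy')).
  rewrite -EFinD lte_fin; lra.
Qed.
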